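(* Let $d\in\mathcal D$ be optimal, i.e. $J^d_{\mu,\sigma}=\max_{d''\in\mathcal D}J^{d''}_{\mu,\sigma}$, and write $(\mathbf P,\mathbf r,J_\mu,\mathbf g)$ for its quantities. Then for every $d'\in\mathcal D$ with $(\mathbf P',\mathbf r')$, $$\sum_{j\in\mathcal S}p'(i,j)g(j)+r'(i)-\beta(r'(i)-J_\mu)^2\ \le\ \sum_{j\in\mathcal S}p(i,j)g(j)+r(i)-\beta(r(i)-J_\mu)^2\qquad\text{for all } i\in\mathcal S.$$
   Context: Let $\mathcal S=\{1,\dots,S\}$ be a finite state space and $\mathcal A$ a finite action set. For $i,j\in\mathcal S$, $a\in\mathcal A$, let $p^a(i,j)\ge 0$ with $\sum_{j}p^a(i,j)=1$ be transition probabilities and $r(i,a)\in\mathbb R$ rewards. A deterministic stationary policy is a map $d:\mathcal S\to\mathcal A$; $\mathcal D$ denotes the set of such policies. Under $d$, $\mathbf P^d$ is the matrix with entries $p(i,j)=p^{d(i)}(i,j)$ and $\mathbf r^d$ the vector with entries $r(i)=r(i,d(i))$. Standing assumption: for every $d\in\mathcal D$ the chain with transition matrix $\mathbf P^d$ is irreducible, so it has a unique stationary distribution $\boldsymbol\pi^d$ (row vector, $\boldsymbol\pi^d\mathbf P^d=\boldsymbol\pi^d$, $\boldsymbol\pi^d\mathbf 1=1$) with all entries strictly positive. Define $J^d_\mu=\boldsymbol\pi^d\mathbf r^d$, $J^d_\sigma=\sum_i\pi^d(i)(r(i,d(i))-J^d_\mu)^2$, and for fixed $\beta>0$, $J^d_{\mu,\sigma}=J^d_\mu-\beta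 J^d_\sigma=\boldsymbol\pi^d\mathbf f^d$ with $f^d(i)=r(i,d(i))-\beta(r(i,d(i))-J^d_\mu)^2$. The performance potential $\mathbf g^d$ is any solution of $\mathbf g^d=\mathbf f^d-J^d_{\mu,\sigma}\mathbf 1+\mathbf P^d\mathbf g^d$ (unique up to an additive constant vector). *)

(* Defs.v *)
From HB Require Import structures.
From mathcomp Require Import all_boot all_order all_algebra.
Set Implicit Arguments. Unset Strict Implicit. Unset Printing Implicit Defensive.
Import Order.TTheory GRing.Theory Num.Theory.
Local Open Scope ring_scope.

(* States are 'I_n (the paper's {1,...,S}), actions a finite type A.
   Transition kernel p a i j = p^a(i,j), rewards r i a = r(i,a).
   A deterministic stationary policy is a function d : 'I_n -> A. *)

Fixpoint mxpow (R : pzRingType) (n : nat) (P : 'M[R]_n) (k : nat) : 'M[R]_n :=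
  match k with
  | O => 1%:M
  | k'.+1 => P *m mxpow P k'
  end.

Definition irreducible (R : numDomainType) (n : nat) (P : 'M[R]_n) : Prop :=
  forall i j : 'I_n, exists k : nat, 0 < mxpow P k i j.

Definition Pmat (R : pzRingType) (n : nat) (A : finType)
  (p : A -> 'I_n -> 'I_n -> R) (d : 'I_n -> A) : 'M[R]_n :=
  \matrix_(i, j) p (d i) i j.

Definition rvec (R : pzRingType) (n : nat) (A : finType)
  (r : 'I_n -> A -> R) (d : 'I_n -> A) : 'cV[R]_n :=
  \col_i r i (d i).

Definition stationary (R : pzRingType) (n : nat) (P : 'M[R]_n) (pi : 'rV[R]_n) : Prop :=
  pi *m P = pi /\ \sum_i pi 0 i = 1.

Definition Jmu (R : pzRingType) (n : nat) (pi : 'rV[R]_n) (rv : 'cV[R]_n) : R :=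
  \sum_i pi 0 i * rv i 0.

Definition Jsigma (R : pzRingType) (n : nat) (pi : 'rV[R]_n) (rv : 'cV[R]_n) : R :=
  \sum_i pi 0 i * (rv i 0 - Jmu pi rv) ^+ 2.

Definition Jms (R : pzRingType) (n : nat) (beta : R) (pi : 'rV[R]_n) (rv : 'cV[R]_n) : R :=
  Jmu pi rv - beta * Jsigma pi rv.

Definition fvec (R : pzRingType) (n : nat) (beta : R) (pi : 'rV[R]_n) (rv : 'cV[R]_n)
  : 'cV[R]_n :=
  \col_i (rv i 0 - beta * (rv i 0 - Jmu pi rv) ^+ 2).

Definition potential (R : pzRingType) (n : nat) (beta : R) (P : 'M[R]_n)
  (pi : 'rV[R]_n) (rv : 'cV[R]_n) (g : 'cV[R]_n) : Prop :=
  g = fvec beta pi rv - const_mx (Jms beta pi rv) + P *m g.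

(* Main.v *)
Require Import Defs.
From HB Require Import structures.
From mathcomp Require Import all_boot all_order all_algebra.
From mathcomp Require Import ring lra.
Import Order.TTheory GRing.Theory Num.Theory.
Local Open Scope ring_scope.

Lemma stat_pos (R : realFieldType) n (P : 'M[R]_n) (x : 'rV[R]_n) :
  (forall i j, 0 <= P i j) -> (forall i, \sum_j P i j = 1) ->
  irreducible P -> stationary P x -> forall j, 0 < x 0 j.
Proof.
move=> P0 P1 irr [xP x1] j.
pose y : 'rV[R]_n := \row_k Num.max (x 0 k) 0.
have y0 k : 0 <= y 0 k by rewrite mxE le_max lexx orbT.
have yx k : x 0 k <= y 0 k by rewrite mxE le_max lexx.
have ge k : y 0 k <= (y *m P) 0 k.
  rewrite [y 0 k]mxE ge_max; apply/andP; split.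
    rewrite -[in X in X <= _]xP !mxE; apply: ler_sum => l _.
    by apply: ler_wpM2r; [apply: P0|apply: yx].
  rewrite mxE; apply: sumr_ge0 => l _; exact: mulr_ge0.
have sumeq : \sum_k ((y *m P) 0 k - y 0 k) = 0.
  rewrite sumrB.
  have -> : \sum_k (y *m P) 0 k = \sum_k y 0 k.
    under eq_bigr do rewrite mxE.
    rewrite exchange_big /=; apply: eq_bigr => l _.
    by rewrite -mulr_sumr P1 mulr1.
  by rewrite subrr.
have yP : y *m P = y.
  apply/matrixP => a k; rewrite (ord1 a).
  apply/eqP; rewrite -subr_eq0; apply/eqP.
  apply: (psumr_eq0P _ sumeq) => // l _; rewrite subr_ge0; exact: ge.
have ypow k : y *m mxpow P k = y.
  elim: k => [|k IH] /=; first by rewrite mulmx1.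
  by rewrite mulmxA yP IH.
have pow0 k a b : 0 <= mxpow P k a b.
  elim: k a b => [|k IH] a b /=; first by rewrite mxE; case: (a == b).
  rewrite mxE; apply: sumr_ge0 => l _; exact: mulr_ge0.
have [l xl] : exists l, 0 < x 0 l.
  case: (boolP [exists l, 0 < x 0 l]) => [/existsP //|/existsPn H].
  have : \sum_k x 0 k <= 0.
    apply: sumr_le0 => k _; by rewrite leNgt H.
  by rewrite x1 ler10.

have [k hk] := irr l j.
have yj : 0 < y 0 j.
  rewrite -(ypow k) mxE (bigD1 l) //=.
  have h1 : 0 < y 0 l * mxpow P k l j.
    apply: mulr_gt0 => //; apply: (lt_le_trans xl); exact: yx.
  have h2 : 0 <= \sum_(a | a != l) y 0 a * mxpow P k a j.
    apply: sumr_ge0 => a _; exact: mulr_ge0.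
  lra.
by move: yj; rewrite mxE lt_max ltxx orbF.
Qed.

Lemma sq_sum (R : realFieldType) n (x : 'rV[R]_n) (a : 'cV[R]_n) c :
  \sum_k x 0 k = 1 ->
  \sum_k x 0 k * (a k 0 - c) ^+ 2 =
  \sum_k x 0 k * (a k 0) ^+ 2 - 2 * c * Jmu x a + c ^+ 2.
Proof.
move=> x1.
transitivity (\sum_k (x 0 k * (a k 0) ^+ 2 - (2 * c) * (x 0 k * a k 0) + c ^+ 2 * x 0 k)).
  by apply: eq_bigr => k _; ring.
by rewrite big_split sumrB /= -!mulr_sumr x1 mulr1.
Qed.

Lemma key (R : realFieldType) n (x pi : 'rV[R]_n) (P1 P : 'M[R]_n)
  (r1 rv g : 'cV[R]_n) beta :
  x *m P1 = x -> \sum_k x 0 k = 1 -> potential beta P pi rv g ->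
  \sum_k x 0 k * ((\sum_l P1 k l * g l 0 + r1 k 0 - beta * (r1 k 0 - Jmu pi rv) ^+ 2)
    - (\sum_l P k l * g l 0 + rv k 0 - beta * (rv k 0 - Jmu pi rv) ^+ 2))
  = Jms beta x r1 - Jms beta pi rv - beta * (Jmu x r1 - Jmu pi rv) ^+ 2.
Proof.
move=> xP x1 Hg.
have hg k : \sum_l P k l * g l 0 + rv k 0 - beta * (rv k 0 - Jmu pi rv) ^+ 2
    = g k 0 + Jms beta pi rv.
  move: (congr1 (fun M : 'cV[R]_n => M k 0) Hg); rewrite /fvec !mxE => e.
  rewrite [in RHS]e; ring.
have A : \sum_k x 0 k * \sum_l P1 k l * g l 0 = \sum_l x 0 l * g l 0.
  under eq_bigr do rewrite mulr_sumr.
  rewrite exchange_big /=; apply: eq_bigr => l _.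
  have := congr1 (fun M : 'rV[R]_n => M 0 l) xP; rewrite mxE => <-.
  rewrite mulr_suml; apply: eq_bigr => k _; by rewrite mulrA.
transitivity (\sum_k x 0 k * \sum_l P1 k l * g l 0 + \sum_k x 0 k * r1 k 0
   - beta * \sum_k x 0 k * (r1 k 0 - Jmu pi rv) ^+ 2 - \sum_k x 0 k * g k 0 - Jms beta pi rv * \sum_k x 0 k).
  rewrite !mulr_sumr -big_split /= -!sumrB; apply: eq_bigr => k _.
  rewrite hg; ring.
rewrite A sq_sum // x1 /Jms /Jsigma (@sq_sum _ _ x r1 (Jmu x r1) x1).
have -> : \sum_k x 0 k * r1 k 0 = Jmu x r1 by [].
ring.
Qed.


Theorem theorem2 (R : realFieldType) (n : nat) (A : finType)
  (p : A -> 'I_n -> 'I_n -> R) (r : 'I_n -> A -> R) (beta : R)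
  (pi : ('I_n -> A) -> 'rV[R]_n)
  (d : 'I_n -> A) (g : 'cV[R]_n) :
  0 < beta ->
  (forall a i j, 0 <= p a i j) ->
  (forall a i, \sum_j p a i j = 1) ->
  (forall d0 : 'I_n -> A, irreducible (Pmat p d0)) ->
  (forall d0 : 'I_n -> A, stationary (Pmat p d0) (pi d0)) ->
  (forall d'' : 'I_n -> A,
     Jms beta (pi d'') (rvec r d'') <= Jms beta (pi d) (rvec r d)) ->
  potential beta (Pmat p d) (pi d) (rvec r d) g ->
  forall (d' : 'I_n -> A) (i : 'I_n),
    \sum_j Pmat p d' i j * g j 0 + rvec r d' i 0
      - beta * (rvec r d' i 0 - Jmu (pi d) (rvec r d)) ^+ 2
    <= \sum_j Pmat p d i j * g j 0 + rvec r d i 0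
      - beta * (rvec r d i 0 - Jmu (pi d) (rvec r d)) ^+ 2.
Proof.
move=> hb P0 P1 irr stat opt pot d' i.
pose d1 := fun k => if k == i then d' i else d k.
have [xP x1] := stat d1.
have xi : 0 < pi d1 0 i.
  apply: (@stat_pos _ _ (Pmat p d1)) => //.
    by move=> a b; rewrite mxE.
  by move=> a; under eq_bigr do rewrite mxE.
have K := @key _ _ (pi d1) (pi d) (Pmat p d1) (Pmat p d) (rvec r d1) (rvec r d) g beta xP x1 pot.
rewrite (bigD1 i) //= [\sum_(k | k != i) _]big1 ?addr0 in K; last first.
  move=> k hk.
  have ed : d1 k = d k by rewrite /d1 (negbTE hk).
  rewrite (eq_bigr (fun l => Pmat p d k l * g l 0)); last by move=> l _; rewrite !mxE ed.
  have -> : rvec r d1 k 0 = rvec r d k 0 by rewrite !mxE ed.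
  by rewrite subrr mulr0.
have ei : d1 i = d' i by rewrite /d1 eqxx.
rewrite (eq_bigr (fun l => Pmat p d' i l * g l 0)) in K; last by move=> l _; rewrite !mxE ei.
have ri : rvec r d1 i 0 = rvec r d' i 0 by rewrite !mxE ei.
rewrite ri in K.
have o := opt d1.
have sq : 0 <= beta * (Jmu (pi d1) (rvec r d1) - Jmu (pi d) (rvec r d)) ^+ 2.
  by apply: mulr_ge0; [exact: ltW|exact: sqr_ge0].
set h := (X in pi d1 0 i * X) in K.
have : pi d1 0 i * h <= 0 by rewrite K; lra.
rewrite (pmulr_rle0 _ xi) /h; lra.
Qed.
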